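(* Let $A\subset\mathbb{N}_0$ be such that $A^2+A=\mathbb{N}_0$. Then (a) $\alpha_A\ge 1/3$; (b) $\beta_A\ge 1/2$; (c) $\alpha_A+\beta_A\ge 1$.
   Context: $\mathbb{N}_0$ is the set of nonnegative integers; $A^2=\{ab:a,b\in A\}$, $A^2+A=\{x+y:x\in A^2,y\in A\}$; $A(X)=|A\cap[1,X]|$. For $A\subset\mathbb{N}_0$, $$\alpha_A=\inf\Big\{t\ge 0: \liminf_{X\to\infty}\frac{A(X)}{X^t}<\infty\Big\},\qquad \beta_A=\inf\Big\{t\ge 0: \limsup_{X\to\infty}\frac{A(X)}{X^t}<\infty\Big\}.$$ *)

(* Defs.v *)
From Stdlib Require Import Reals Lra ClassicalEpsilon.
From Coquelicot Require Import Coquelicot.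
Open Scope R_scope.

Definition pdec (P : Prop) : bool :=
  if excluded_middle_informative P then true else false.

(* A^2 + A = N_0 : every n is a*b + c with a, b, c in A *)
Definition prodsum_all (A : nat -> Prop) : Prop :=
  forall n : nat, exists a b c : nat, A a /\ A b /\ A c /\ n = (a * b + c)%nat.

Fixpoint countA (A : nat -> Prop) (n : nat) : nat :=
  match n with
  | O => O
  | S m => (countA A m + (if pdec (A (S m)) then 1 else 0))%nat
  end.

(* A(X) = |A ∩ [1, X]| for real X (0 for X < 1) *)
Definition countR (A : nat -> Prop) (X : R) : R :=
  INR (countA A (Z.to_nat (Int_part X))).

Definition liminf_finite (A : nat -> Prop) (t : R) : Prop :=
  exists C : R, forall X0 : R, exists X : R,
    X0 <= X /\ 1 <= X /\ countR A X / Rpower X t <= C.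

Definition limsup_finite (A : nat -> Prop) (t : R) : Prop :=
  exists C : R, exists X0 : R, forall X : R,
    X0 <= X -> 1 <= X -> countR A X / Rpower X t <= C.

Definition alphaA (A : nat -> Prop) : Rbar :=
  Glb_Rbar (fun t => 0 <= t /\ liminf_finite A t).

Definition betaA (A : nat -> Prop) : Rbar :=
  Glb_Rbar (fun t => 0 <= t /\ limsup_finite A t).

(* Main.v *)
Require Import Defs.
From Stdlib Require Import Reals.
From Coquelicot Require Import Coquelicot.
From Stdlib Require Import Lra Lia Arith List ZArith ClassicalEpsilon.
Open Scope R_scope.

Lemma pdec_true (P : Prop) : P -> pdec P = true.
Proof. unfold pdec; destruct excluded_middle_informative; tauto. Qed.

Fixpoint LA (A : nat -> Prop) (n : nat) : list nat :=
  match n with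
  | O => nil
  | S m => LA A m ++ (if pdec (A (S m)) then S m :: nil else nil)
  end.

Lemma LA_length A n : length (LA A n) = countA A n.
Proof.
  induction n; simpl; auto. rewrite length_app, IHn.
  destruct (pdec (A (S n))); simpl; lia.
Qed.

Lemma LA_in A n x : (1 <= x <= n)%nat -> A x -> In x (LA A n).
Proof.
  induction n; intros Hx Ax; [lia|]. simpl. apply in_or_app.
  destruct (Nat.eq_dec x (S n)) as [->|Hne].
  - right. rewrite pdec_true by auto. simpl; auto.
  - left. apply IHn; auto; lia.
Qed.

Lemma countA_mono A m n : (m <= n)%nat -> (countA A m <= countA A n)%nat.
Proof. induction 1; simpl; lia. Qed.

Fixpoint Ssum (A : nat -> Prop) (N M : nat) : nat :=
  match M with
  | O => O
  | S m => (Ssum A N m + (if pdec (A (S m)) then countA A (N / S m) else 0))%nat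
  end.

Lemma Ssum_mono A N m n : (m <= n)%nat -> (Ssum A N m <= Ssum A N n)%nat.
Proof. induction 1; simpl; lia. Qed.

Lemma Ssum_sq A N M : (Ssum A N M <= countA A M * countA A N)%nat.
Proof.
  induction M; cbn [Ssum countA]; auto.
  assert (countA A (N / S M) <= countA A N)%nat by (apply countA_mono, Nat.Div0.div_le_upper_bound; nia).
  destruct (pdec (A (S M))); nia.
Qed.

Lemma Ssum_block A N L d :
  (Ssum A N (L + d) + countA A L * countA A (N / S L)
   <= Ssum A N L + countA A (L + d) * countA A (N / S L))%nat.
Proof.
  induction d.
  - rewrite Nat.add_0_r; lia.
  - rewrite Nat.add_succ_r. cbn [Ssum countA].
    assert (countA A (N / S (L + d)) <= countA A (N / S L))%nat.
    { apply countA_mono, Nat.div_le_compat_l; lia. }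
    destruct (pdec (A (S (L + d)))); nia.
Qed.

Lemma Ssum_double A N L :
  (Ssum A N (2 * L) <= Ssum A N L + countA A (2 * L) * countA A (N / S L))%nat.
Proof.
  pose proof (Ssum_block A N L L). replace (L + L)%nat with (2 * L)%nat in H by lia. lia.
Qed.

Lemma flat_len (f : nat -> nat) (C0 : list nat) (l : list nat) :
  length (flat_map (fun b => map (fun c => f b + c)%nat C0) l) = (length l * length C0)%nat.
Proof. induction l; simpl; auto. rewrite length_app, length_map, IHl. lia. Qed.

Lemma count_main A (hA : prodsum_all A) N :
  (S N <= (countA A N + 1) * (1 + Ssum A N N))%nat.
Proof.
  remember (0%nat :: LA A N) as C0 eqn:HC0.
  set (F := fun M => flat_map (fun a => flat_map (fun b => map (fun c => a * b + c)%nat C0) (LA A (N / a))) (LA A M)).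
  assert (HF : forall M, length (F M) = (Ssum A N M * length C0)%nat).
  { intro M; induction M; cbn [Ssum countA]; auto. unfold F in *. simpl. rewrite flat_map_app, length_app. rewrite IHM.
    destruct (pdec (A (S M))); simpl; [|lia]. rewrite length_app, flat_len, LA_length. simpl. lia. }
  assert (HC : length C0 = S (countA A N)) by (rewrite HC0; simpl; rewrite LA_length; auto).
  assert (Hinc : incl (seq 0 (S N)) (C0 ++ F N)).
  { intros n Hn. apply in_seq in Hn. destruct (hA n) as (a & b & c & Aa & Ab & Ac & En).
    assert (HcC : In c C0).
    { rewrite HC0; destruct c; [left; auto| right; apply LA_in; auto; lia]. }
    apply in_or_app. destruct (Nat.eq_dec (a * b) 0) as [H0|H0].
    - left. replace n with c by lia. auto.
    - right. assert (Hab : (1 <= a /\ 1 <= b)%nat) by (destruct a; destruct b; lia). unfold F. apply in_flat_map. exists a. split.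
      + apply LA_in; auto. nia.
      + apply in_flat_map. exists b. split.
        * apply LA_in; auto. split; [nia|]. apply Nat.div_le_lower_bound; nia.
        * apply in_map_iff. exists c. split; auto. }
  pose proof (NoDup_incl_length (seq_NoDup (S N) 0) Hinc).
  rewrite length_seq, length_app, HF, HC in H. nia.
Qed.

Lemma Rpower_pos x y : 0 < Rpower x y.
Proof. unfold Rpower; apply exp_pos. Qed.

Lemma INR2 : INR 2 = 2.
Proof. simpl; lra. Qed.

Lemma Rpow_pow2 t m : Rpower (INR (2 ^ m)%nat) t = (Rpower 2 t) ^ m.
Proof.
  rewrite pow_INR, INR2, <- Rpower_pow by lra.
  rewrite <- Rpower_pow by apply Rpower_pos.
  rewrite !Rpower_mult. f_equal. ring.
Qed.

Lemma r_ge1 t : 0 <= t -> 1 <= Rpower 2 t.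
Proof. intro. rewrite <- (Rpower_O 2) by lra. apply Rle_Rpower; lra. Qed.

Lemma pow2_ge1 m : (1 <= 2 ^ m)%nat.
Proof. apply (Nat.pow_le_mono_r 2 0 m); lia. Qed.

Lemma countR_nat A n : countR A (INR n) = INR (countA A n).
Proof. unfold countR. rewrite Int_part_INR, Nat2Z.id. reflexivity. Qed.

Lemma floor_lemma A X : 1 <= X -> exists N, (1 <= N)%nat /\
  countR A X = INR (countA A N) /\ INR N <= X < INR N + 1.
Proof.
  intro HX. destruct (base_Int_part X) as [H1 H2].
  assert (Hz : (1 <= Int_part X)%Z).
  { apply le_IZR. assert (0 < IZR (Int_part X)) by lra.
    assert (0 < Int_part X)%Z by (apply lt_IZR; auto). apply IZR_le; lia. }
  exists (Z.to_nat (Int_part X)).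
  assert (HI : INR (Z.to_nat (Int_part X)) = IZR (Int_part X)).
  { rewrite INR_IZR_INZ, Z2Nat.id by lia. reflexivity. }
  split; [lia|]. split; [reflexivity|]. rewrite HI. lra.
Qed.

Lemma div_le a b C : 0 < b -> a / b <= C -> a <= C * b.
Proof.
  intros Hb H. replace a with ((a / b) * b) by (field; lra).
  apply Rmult_le_compat_r; lra.
Qed.

Lemma nat_unbounded x : exists n : nat, x < INR n.
Proof.
  destruct (archimed x) as [H1 H2].
  destruct (Z_lt_le_dec (up x) 0).
  - exists 0%nat. apply IZR_lt in l. simpl. lra.
  - exists (Z.to_nat (up x)). rewrite INR_IZR_INZ, Z2Nat.id by lia. lra.
Qed.

Lemma bern d k : 0 <= d -> 1 + INR k * d + INR k * (INR k - 1) / 2 * d ^ 2 <= (1 + d) ^ k.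
Proof.
  intro Hd. induction k.
  - simpl; lra.
  - rewrite S_INR. simpl pow.
    assert (Hk : 0 <= INR k * (INR k - 1)).
    { destruct k; [simpl; lra|]. rewrite S_INR. pose proof (pos_INR k). nra. }
    assert (H1 : (1 + d) * (1 + INR k * d + INR k * (INR k - 1) / 2 * d ^ 2) <= (1 + d) * (1 + d) ^ k).
    { apply Rmult_le_compat_l; lra. }
    assert (H2 : 0 <= INR k * (INR k - 1) / 2 * d ^ 3).
    { apply Rmult_le_pos; [lra|]. apply pow_le; lra. }
    simpl pow in *. nra.
Qed.

Lemma growth q D : 1 < q ->
  ~ (forall K0, exists k, (K0 <= k)%nat /\ q ^ k <= D * (INR k + 1)).
Proof.
  intros Hq H. set (d := q - 1).
  assert (Hd : 0 < d) by (unfold d; lra).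
  assert (Hd2 : 0 < d * d) by nra.
  destruct (nat_unbounded (4 * Rabs D / (d * d) + 3)) as [K0 HK0].
  destruct (H K0) as [k [Hk Hqk]].
  apply le_INR in Hk. set (x := INR k) in *.
  pose proof (bern d k (Rlt_le _ _ Hd)) as Hb. replace (1 + d) with q in Hb by (unfold d; ring).
  fold x in Hb. simpl pow in Hb.
  assert (HA : 0 <= Rabs D / (d * d)) by (apply Rdiv_le_0_compat; [apply Rabs_pos|lra]).
  assert (Hx3 : 3 < x) by lra.
  assert (Hxd : 4 * Rabs D < x * (d * d)).
  { assert (4 * Rabs D / (d * d) < x) by lra.
    replace (4 * Rabs D) with ((4 * Rabs D / (d * d)) * (d * d)) by (field; lra).
    apply Rmult_lt_compat_r; lra. }
  assert (H1 : x * (x + 1) * (d * d) / 4 <= q ^ k).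
  { assert (x * (x+1) * (d*d) / 4 <= x * (x - 1) / 2 * (d * (d * 1))) by nra.
    assert (0 <= x * d) by nra. lra. }
  assert (H2 : D * (x + 1) <= Rabs D * (x + 1)).
  { apply Rmult_le_compat_r; [lra|]. apply Rle_abs. }
  assert (H3 : Rabs D * (x + 1) < x * (x + 1) * (d * d) / 4) by nra.
  lra.
Qed.

Lemma final_contra rho D : 0 < rho < 2 ->
  (forall K0, exists l, (K0 <= l)%nat /\ 2 ^ l <= D * (INR l + 1) * rho ^ l) -> False.
Proof.
  intros Hr H. apply (growth (2 / rho) D).
  - apply (Rmult_lt_reg_r rho); [lra|]. field_simplify; lra.
  - intro K0. destruct (H K0) as [l [Hl Hle]]. exists l. split; auto.
    unfold Rdiv. rewrite Rpow_mult_distr, pow_inv.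
    assert (0 < rho ^ l) by (apply pow_lt; lra).
    apply (Rmult_le_reg_r (rho ^ l)); auto.
    rewrite Rmult_assoc, Rinv_l by lra. lra.
Qed.

Lemma dyadic A K r (Hr : 1 <= r) (HK0 : 0 <= K)
  (HK : forall m, INR (countA A (2 ^ m)%nat) <= K * r ^ m) N k (HN : (N <= 2 ^ k)%nat) :
  forall j, (j <= k)%nat -> INR (Ssum A N (2 ^ j)%nat) <= K * r ^ k + INR j * (K * K * r ^ (S k)).
Proof.
  induction j; intro Hj.
  - simpl Nat.pow. cbn [Ssum]. rewrite Nat.div_1_r.
    assert (INR (countA A N) <= K * r ^ k).
    { eapply Rle_trans; [apply le_INR, countA_mono, HN| apply HK]. }
    assert (0 <= K * K * r ^ S k) by (apply Rmult_le_pos; [nra| apply pow_le; lra]).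
    pose proof (pos_INR (countA A N)). destruct (pdec (A 1%nat)); rewrite Nat.add_0_l; change (INR 0) with 0; lra.
  - rewrite Nat.pow_succ_r'.
    pose proof (Ssum_double A N (2 ^ j)) as Hd. apply le_INR in Hd.
    rewrite plus_INR, mult_INR in Hd.
    assert (Hq : (N / S (2 ^ j) <= 2 ^ (k - j))%nat).
    { apply Nat.lt_le_incl, Nat.Div0.div_lt_upper_bound.
      assert (2 ^ k = 2 ^ j * 2 ^ (k - j))%nat by (rewrite <- Nat.pow_add_r; f_equal; lia).
      pose proof (pow2_ge1 (k - j)). nia. }
    assert (H1 : INR (countA A (N / S (2 ^ j))) <= K * r ^ (k - j)).
    { eapply Rle_trans; [apply le_INR, countA_mono, Hq| apply HK]. }
    assert (H2 : INR (countA A (2 * 2 ^ j)) <= K * r ^ (S j)).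
    { rewrite <- Nat.pow_succ_r'. apply HK. }
    assert (H3 : INR (countA A (2 * 2 ^ j)) * INR (countA A (N / S (2 ^ j))) <= K * K * r ^ S k).
    { replace (K * K * r ^ S k) with ((K * r ^ S j) * (K * r ^ (k - j))).
      - apply Rmult_le_compat; auto using pos_INR.
      - replace (S k) with (S j + (k - j))%nat by lia. rewrite pow_add. ring. }
    specialize (IHj ltac:(lia)). rewrite S_INR. lra.
Qed.

Lemma limsup_K A t (Ht : 0 <= t) : limsup_finite A t ->
  exists K, 0 <= K /\ forall m, INR (countA A (2 ^ m)%nat) <= K * (Rpower 2 t) ^ m.
Proof.
  intros [C2 [X0 H2]].
  destruct (nat_unbounded X0) as [M0 HM0].
  exists (Rmax C2 0 + INR (countA A M0)). split.
  { pose proof (Rmax_r C2 0). pose proof (pos_INR (countA A M0)). lra. }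
  intro m. pose proof (r_ge1 t Ht) as Hr.
  assert (Hrm : 1 <= Rpower 2 t ^ m) by (apply pow_R1_Rle; auto).
  pose proof (Rmax_r C2 0). pose proof (Rmax_l C2 0). pose proof (pos_INR (countA A M0)).
  destruct (Rle_lt_dec X0 (INR (2 ^ m)%nat)) as [Hle|Hlt].
  - assert (H1m : 1 <= INR (2 ^ m)%nat) by (apply (le_INR 1); apply pow2_ge1).
    specialize (H2 _ Hle H1m). rewrite countR_nat, Rpow_pow2 in H2.
    apply div_le in H2; [|lra].
    assert (C2 * Rpower 2 t ^ m <= Rmax C2 0 * Rpower 2 t ^ m) by (apply Rmult_le_compat_r; lra).
    nra.
  - assert (Hm : (2 ^ m <= M0)%nat) by (apply INR_le; lra).
    apply (countA_mono A) in Hm. apply le_INR in Hm.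
    nra.
Qed.

Lemma liminf_good A t (Ht : 0 <= t) : liminf_finite A t ->
  exists C, 0 <= C /\ forall K0, exists N l, (K0 <= l)%nat /\ (2 ^ l <= N < 2 ^ S l)%nat /\
    INR (countA A N) <= C * (Rpower 2 t) ^ (S l).
Proof.
  intros [C1 H1].
  exists (Rmax C1 0). split; [apply Rmax_r|]. intro K0.
  destruct (H1 (INR (2 ^ K0)%nat + 1)) as [X [HX0 [HX1 HXC]]].
  destruct (floor_lemma A X HX1) as [N [HN1 [HcR [HNl HNu]]]].
  pose proof (Nat.log2_spec N ltac:(lia)) as Hl.
  exists N, (Nat.log2 N). split; [|split; auto].
  - assert (HK : (2 ^ K0 < N)%nat) by (apply INR_lt; lra).
    rewrite <- (Nat.log2_pow2 K0) by lia. apply Nat.log2_le_mono. lia.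
  - rewrite HcR in HXC. apply div_le in HXC; [|apply Rpower_pos].
    assert (HXr : Rpower X t <= Rpower 2 t ^ S (Nat.log2 N)).
    { rewrite <- Rpow_pow2. apply Rle_Rpower_l; auto. split; [lra|].
      assert (HSN : INR (S N) <= INR (2 ^ S (Nat.log2 N))%nat) by (apply le_INR; lia).
      rewrite S_INR in HSN. lra. }
    pose proof (Rpower_pos X t). pose proof (Rmax_r C1 0). pose proof (Rmax_l C1 0).
    assert (C1 * Rpower X t <= Rmax C1 0 * Rpower X t) by (apply Rmult_le_compat_r; lra).
    assert (Rmax C1 0 * Rpower X t <= Rmax C1 0 * Rpower 2 t ^ S (Nat.log2 N)) by (apply Rmult_le_compat_l; lra).
    lra.
Qed.

Lemma main_real A (hA : prodsum_all A) N :
  INR (S N) <= (INR (countA A N) + 1) * (1 + INR (Ssum A N N)).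
Proof.
  pose proof (count_main A hA N) as H. apply le_INR in H.
  rewrite mult_INR, !plus_INR in H. change (INR 1) with 1 in H. lra.
Qed.

Lemma rho_lt2 s : s < 1 -> Rpower 2 s < 2.
Proof. intro. rewrite <- (Rpower_1 2) at 2 by lra. apply Rpower_lt; lra. Qed.

Lemma pow2l_le N l : (2 ^ l <= N)%nat -> 2 ^ l <= INR (S N).
Proof.
  intro H. apply le_INR in H. rewrite pow_INR, INR2 in H. rewrite S_INR. lra.
Qed.

Lemma core_c A (hA : prodsum_all A) t1 t2 : 0 <= t1 -> 0 <= t2 ->
  liminf_finite A t1 -> limsup_finite A t2 -> 1 <= t1 + t2.
Proof.
  intros Ht1 Ht2 Hi Hs.
  destruct (Rlt_or_le (t1 + t2) 1) as [Hlt|]; [exfalso|lra].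
  destruct (limsup_K A t2 Ht2 Hs) as [K [HK0 HK]].
  destruct (liminf_good A t1 Ht1 Hi) as [C [HC0 HG]].
  pose proof (r_ge1 t2 Ht2) as Hr. pose proof (r_ge1 t1 Ht1) as Hr1.
  set (r := Rpower 2 t2) in *. set (r1 := Rpower 2 t1) in *.
  apply (final_contra (r1 * r) ((C + 1) * (1 + K + K * K * r) * (r1 * r))).
  - split; [nra|]. unfold r, r1. rewrite <- Rpower_plus. apply rho_lt2; lra.
  - intro K0. destruct (HG K0) as [N [l [Hl [HN Hc]]]]. exists l. split; auto.
    pose proof (dyadic A K r Hr HK0 HK N (S l) ltac:(lia) (S l) (le_n _)) as Hd.
    pose proof (Ssum_mono A N N (2 ^ S l) ltac:(lia)) as Hm. apply le_INR in Hm.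
    pose proof (main_real A hA N) as Hmain.
    pose proof (pow2l_le N l ltac:(lia)) as H2l.
    assert (Ha : 1 <= r1 ^ S l) by (apply pow_R1_Rle; auto).
    assert (Hb : 1 <= r ^ S l) by (apply pow_R1_Rle; auto).
    set (a := r1 ^ S l) in *. set (b := r ^ S l) in *.
    assert (Hbb : r ^ S (S l) = r * b) by reflexivity.
    rewrite Hbb, S_INR in Hd.
    set (c := INR (countA A N)) in *. set (s := INR (Ssum A N N)) in *.
    assert (Hc0 : 0 <= c) by apply pos_INR. assert (Hs0 : 0 <= s) by apply pos_INR.
    pose proof (pos_INR l) as Hl0.
    assert (H1 : c + 1 <= (C + 1) * a) by nra.
    assert (H2 : 1 + s <= (INR l + 1) * b * (1 + K + K * K * r)).
    { assert (0 <= K * b) by nra. assert (0 <= K * K * r * b) by (apply Rmult_le_pos; [|lra]; apply Rmult_le_pos; nra).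
      assert (INR l * (K * b) >= 0) by nra. assert (INR l * b >= 0) by nra.
      nra. }
    assert (H3 : (c + 1) * (1 + s) <= (C + 1) * a * ((INR l + 1) * b * (1 + K + K * K * r))).
    { apply Rmult_le_compat; lra. }
    replace ((C + 1) * (1 + K + K * K * r) * (r1 * r) * (INR l + 1) * (r1 * r) ^ l)
      with ((C + 1) * a * ((INR l + 1) * b * (1 + K + K * K * r))).
    + lra.
    + unfold a, b. simpl pow. rewrite Rpow_mult_distr. ring.
Qed.

Lemma core_a A (hA : prodsum_all A) t : 0 <= t -> liminf_finite A t -> 1 <= 3 * t.
Proof.
  intros Ht Hi.
  destruct (Rlt_or_le (3 * t) 1) as [Hlt|]; [exfalso|lra].
  destruct (liminf_good A t Ht Hi) as [C [HC0 HG]].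
  pose proof (r_ge1 t Ht) as Hr1.
  set (r1 := Rpower 2 t) in *.
  assert (Hr3 : 1 <= r1 * r1 * r1) by nra.
  apply (final_contra (r1 * r1 * r1) ((C + 1) * (1 + C * C) * (r1 * r1 * r1))).
  - split; [nra|]. unfold r1. rewrite <- !Rpower_plus. apply rho_lt2; lra.
  - intro K0. destruct (HG K0) as [N [l [Hl [HN Hc]]]]. exists l. split; auto.
    pose proof (Ssum_sq A N N) as Hsq. apply le_INR in Hsq. rewrite mult_INR in Hsq.
    pose proof (main_real A hA N) as Hmain.
    pose proof (pow2l_le N l ltac:(lia)) as H2l.
    assert (Ha : 1 <= r1 ^ S l) by (apply pow_R1_Rle; auto).
    set (a := r1 ^ S l) in *.
    set (c := INR (countA A N)) in *. set (s := INR (Ssum A N N)) in *.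
    assert (Hc0 : 0 <= c) by apply pos_INR. assert (Hs0 : 0 <= s) by apply pos_INR.
    pose proof (pos_INR l) as Hl0.
    assert (H1 : c + 1 <= (C + 1) * a) by nra.
    assert (H2 : 1 + s <= (1 + C * C) * (a * a)).
    { assert (c * c <= (C * a) * (C * a)) by (apply Rmult_le_compat; lra). nra. }
    assert (H3 : (c + 1) * (1 + s) <= (C + 1) * a * ((1 + C * C) * (a * a))).
    { apply Rmult_le_compat; lra. }
    assert (Hrl : 1 <= (r1 * r1 * r1) ^ l) by (apply pow_R1_Rle; auto).
    assert (E : (C + 1) * a * ((1 + C * C) * (a * a)) = (C + 1) * (1 + C * C) * (r1 * r1 * r1) * (r1 * r1 * r1) ^ l).
    { unfold a. simpl pow. rewrite !Rpow_mult_distr. ring. }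
    assert (0 <= (C + 1) * (1 + C * C) * (r1 * r1 * r1) * (r1 * r1 * r1) ^ l).
    { apply Rmult_le_pos; [|lra]. apply Rmult_le_pos; [|lra]. apply Rmult_le_pos; nra. }
    assert ((C + 1) * (1 + C * C) * (r1 * r1 * r1) * (r1 * r1 * r1) ^ l <=
            (C + 1) * (1 + C * C) * (r1 * r1 * r1) * (INR l + 1) * (r1 * r1 * r1) ^ l) by nra.
    lra.
Qed.

Lemma limsup_liminf A t : limsup_finite A t -> liminf_finite A t.
Proof.
  intros [C [X0 H]]. exists C. intro X1. exists (Rmax (Rmax X0 X1) 1).
  pose proof (Rmax_l (Rmax X0 X1) 1). pose proof (Rmax_r (Rmax X0 X1) 1).
  pose proof (Rmax_l X0 X1). pose proof (Rmax_r X0 X1).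
  split; [lra|]. split; [lra|]. apply H; lra.
Qed.

Theorem proposition3p1 (A : nat -> Prop) (hA : prodsum_all A) :
  Rbar_le (Finite (1/3)) (alphaA A) /\
  Rbar_le (Finite (1/2)) (betaA A) /\
  Rbar_le (Finite 1) (Rbar_plus (alphaA A) (betaA A)).
Proof.
  set (E1 := fun t => 0 <= t /\ liminf_finite A t).
  set (E2 := fun t => 0 <= t /\ limsup_finite A t).
  assert (Ea : alphaA A = Glb_Rbar E1) by reflexivity.
  assert (Eb : betaA A = Glb_Rbar E2) by reflexivity.
  destruct (Glb_Rbar_correct E1) as [_ G1].
  destruct (Glb_Rbar_correct E2) as [_ G2].
  assert (Ha : Rbar_le (Finite (1/3)) (alphaA A)).
  { rewrite Ea. apply G1. intros x [Hx0 Hx]. simpl. pose proof (core_a A hA x Hx0 Hx). lra. }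
  assert (Hb : Rbar_le (Finite (1/2)) (betaA A)).
  { rewrite Eb. apply G2. intros x [Hx0 Hx]. simpl.
    pose proof (core_c A hA x x Hx0 Hx0 (limsup_liminf A x Hx) Hx). lra. }
  split; [auto|split; [auto|]].
  destruct (alphaA A) as [a| |] eqn:HA; destruct (betaA A) as [b| |] eqn:HB;
    simpl in *; try tauto.
  assert (Hlb : Rbar_le (Finite (1 - a)) (Glb_Rbar E2)).
  { apply G2. intros t2 [Ht2 Hs]. simpl.
    assert (Rbar_le (Finite (1 - t2)) (Glb_Rbar E1)).
    { apply G1. intros t1 [Ht1 Hi]. simpl. pose proof (core_c A hA t1 t2 Ht1 Ht2 Hi Hs). lra. }
    rewrite <- Ea in H. simpl in H. lra. }
  rewrite <- Eb in Hlb. simpl in Hlb. lra.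
Qed.
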